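(* Let $X \subset Y \subset \mathbb{R}^{n}$ be finite sets, let $k \geq 0$ be an integer, let $r > 0$ and $s \geq 0$. Suppose that $X^{k+1}_{dis}$ is $r$-dense in $Y^{k+1}_{dis}$ and that $L_{s,k}(Y) \neq \emptyset$. Then there is a simplicial map $\theta: L_{s,k}(Y) \to L_{s+2r,k}(X)$ such that, for the inclusions $j: L_{s,k}(X) \to L_{s+2r,k}(X)$, $j: L_{s,k}(Y) \to L_{s+2r,k}(Y)$ and $i: L_{s,k}(X) \to L_{s,k}(Y)$, $i: L_{s+2r,k}(X) \to L_{s+2r,k}(Y)$, one has $\theta \circ i = j$ (strict commutativity of the upper triangle), and $i \circ \theta$ is homotopic to $j: L_{s,k}(Y) \to L_{s+2r,k}(Y)$ after geometric realization.
   Context: $\mathbb{R}^n$ carries the Euclidean metric $d$. For subsets $A \subset B$ of a metric space and $r>0$, $A$ is $r$-dense in $B$ if for every $b \in B$ there is an $a \in A$ with $d(a,b) < r$. For a finite $X \subset \mathbb{R}^n$ and $s \ge 0$, $V_{s}(X)$ is the Vietoris–Rips complex: vertex set $X$, simplices the nonempty subsets $\{x_0,\dots,x_p\}$ with $d(x_i,x_j) \le s$ for all $i,j$. For an integer $k \geq 0$, the Lesnick complex $L_{s,k}(X)$ is the full subcomplex of $V_{s}(X)$ on the set of vertices $x \in X$ for which there exist at least $k$ points $x' \in X$, distinct from $x$, with $d(x,x') \leq s$. $X^{k+1}_{dis}$ denotes the set of ordered $(k+1)$-tuples of pairwise distinct points of $X$, regarded as a subset of $(\mathbb{R}^{n})^{k+1}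 = \mathbb{R}^{n(k+1)}$ with its Euclidean metric. *)

(* Defs.v *)
From Stdlib Require Import Reals List.
Import ListNotations.
Open Scope R_scope.

(* A point of R^n is a list of n reals; a finite subset of R^n is a
   duplicate-free list of such points. *)
Definition pt := list R.

Definition sum_list (l : list R) : R := fold_right Rplus 0 l.

(* Euclidean distance (on lists of equal length). *)
Definition dist (x y : pt) : R :=
  sqrt (sum_list (map (fun p => (fst p - snd p) ^ 2) (combine x y))).

Definition is_point (n : nat) (x : pt) : Prop := length x = n.

(* X^{k+1}_dis : ordered (k+1)-tuples of pairwise distinct points of X. *)
Definition dis_tuple (X : list pt) (k : nat) (t : list pt) : Prop :=
  length t = S k /\ NoDup t /\ (forall x, In x t -> In x X).

(* Euclidean distance in R^{n(k+1)}: concatenate coordinates. *)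
Definition tuple_dist (t u : list pt) : R := dist (concat t) (concat u).

Definition tuples_dense (r : R) (X Y : list pt) (k : nat) : Prop :=
  forall b, dis_tuple Y k b -> exists a, dis_tuple X k a /\ tuple_dist a b < r.

Definition lesnick_vert (s : R) (k : nat) (X : list pt) (x : pt) : Prop :=
  In x X /\
  exists l : list pt, length l = k /\ NoDup l /\
    (forall x', In x' l -> In x' X /\ x' <> x /\ dist x x' <= s).

(* Simplices of L_{s,k}(X): full subcomplex of the Vietoris-Rips complex
   V_s(X) on the Lesnick vertices.  A simplex is given by a nonempty list
   of its vertices. *)
Definition lesnick_simplex (s : R) (k : nat) (X : list pt) (sigma : list pt) : Prop :=
  sigma <> [] /\
  (forall x, In x sigma -> lesnick_vert s k X x) /\
  (forall x y, In x sigma -> In y sigma -> dist x y <= s).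

Definition complex_nonempty (K : list pt -> Prop) : Prop := exists sigma, K sigma.

Definition simplicial (K L : list pt -> Prop) (theta : pt -> pt) : Prop :=
  forall sigma, K sigma -> L (map theta sigma).

(* Geometric realization |K|: barycentric coordinate functions supported on a
   simplex of K, nonnegative, summing to 1. *)
Definition in_real (K : list pt -> Prop) (a : pt -> R) : Prop :=
  exists sigma, K sigma /\ NoDup sigma /\
    (forall v, ~ In v sigma -> a v = 0) /\
    (forall v, In v sigma -> 0 <= a v) /\
    sum_list (map a sigma) = 1.

Definition pt_eq_dec : forall x y : pt, {x = y} + {x <> y} :=
  list_eq_dec Req_EM_T.

(* Geometric realization |f| of a vertex map f, for complexes with vertices
   in the duplicate-free list V. *)
Definition real_map (V : list pt) (f : pt -> pt) (a : pt -> R) : pt -> R :=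
  fun w => sum_list (map (fun v => if pt_eq_dec (f v) w then a v else 0) V).

(* Continuous maps on geometric realizations of finite complexes whose
   vertices lie in V (topology = metric topology of the sup-distance of
   barycentric coordinates, which is the usual topology for finite complexes). *)
Definition homotopic_real (V : list pt) (K L : list pt -> Prop)
  (f g : (pt -> R) -> (pt -> R)) : Prop :=
  exists H : (pt -> R) -> R -> (pt -> R),
    (forall a t, in_real K a -> 0 <= t <= 1 -> in_real L (H a t)) /\
    (forall a w, in_real K a -> H a 0 w = f a w) /\
    (forall a w, in_real K a -> H a 1 w = g a w) /\
    (forall a t, in_real K a -> 0 <= t <= 1 ->
       forall eps, 0 < eps -> exists delta, 0 < delta /\
         forall b u, in_real K b -> 0 <= u <= 1 -> Rabs (u - t) < delta ->
           (forall v, In v V -> Rabs (b v - a v) < delta) ->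
           forall w, In w V -> Rabs (H b u w - H a t w) < eps).

(* Main.v *)
Require Import Defs.
From Stdlib Require Import Reals List Lra Lia Psatz Classical ClassicalEpsilon.
Import ListNotations.
Open Scope R_scope.
Local Notation dist := Defs.dist.

Definition sq (x y : pt) : R := sum_list (map (fun p => (fst p - snd p) ^ 2) (combine x y)).
Lemma dist_sq x y : dist x y = sqrt (sq x y). Proof. reflexivity. Qed.
Lemma sum_list_cons a l : sum_list (a :: l) = a + sum_list l. Proof. reflexivity. Qed.
Lemma sum_list_app l1 l2 : sum_list (l1 ++ l2) = sum_list l1 + sum_list l2.
Proof. induction l1 as [|a l1 IH]; [simpl; ring|]. rewrite <- app_comm_cons, !sum_list_cons, IH. ring. Qed.
Lemma sum_list_nonneg l : (forall x, In x l -> 0 <= x) -> 0 <= sum_list l.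
Proof. induction l as [|a l IH]; intros H; [simpl; lra|]. rewrite sum_list_cons.
  assert (0 <= a) by (apply H; simpl; auto). assert (0 <= sum_list l) by (apply IH; intros; apply H; simpl; auto). lra. Qed.
Lemma sum_list_In l x : (forall y, In y l -> 0 <= y) -> In x l -> x <= sum_list l.
Proof. induction l as [|a l IH]; intros H Hx; [contradiction|]. rewrite sum_list_cons. destruct Hx as [<-|Hx].
 - assert (0 <= sum_list l) by (apply sum_list_nonneg; intros; apply H; simpl; auto). lra.
 - assert (0 <= a) by (apply H; simpl; auto). assert (x <= sum_list l) by (apply IH; auto; intros; apply H; simpl; auto). lra. Qed.
Lemma sq_nonneg x y : 0 <= sq x y.
Proof. unfold sq. apply sum_list_nonneg. intros z Hz. apply in_map_iff in Hz. destruct Hz as [p [<- _]]. apply pow2_ge_0. Qed.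
Lemma sq_cons a x b y : sq (a::x) (b::y) = (a-b)^2 + sq x y. Proof. reflexivity. Qed.
Lemma sq_refl x : sq x x = 0.
Proof. induction x as [|a x IH]; [reflexivity|]. rewrite sq_cons, IH. ring. Qed.
Lemma sq_sym x y : sq x y = sq y x.
Proof. revert y; induction x as [|a x IH]; intros [|b y]; try reflexivity. rewrite !sq_cons, IH. ring. Qed.
Lemma dist_refl x : dist x x = 0. Proof. rewrite dist_sq, sq_refl. apply sqrt_0. Qed.
Lemma dist_sym x y : dist x y = dist y x. Proof. rewrite !dist_sq, sq_sym. reflexivity. Qed.

Lemma tri_key a b p q P Q : 0 <= p -> 0 <= q -> 0 <= P -> 0 <= Q ->
  P*P = a^2 + p*p -> Q*Q = b^2 + q*q -> (a+b)^2 + (p+q)*(p+q) <= (P+Q)*(P+Q).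
Proof. intros. assert (H5: (a*b + p*q)^2 <= (P*Q)^2).
 { replace ((P*Q)^2) with ((P*P)*(Q*Q)) by ring. rewrite H3, H4. pose proof (pow2_ge_0 (a*q - p*b)). nra. }
 assert (0 <= P*Q) by (apply Rmult_le_pos; auto).
 assert (a*b+p*q <= P*Q).
 { destruct (Rle_dec (a*b+p*q) (P*Q)) as [|Hn]; auto. exfalso. apply Rnot_le_lt in Hn.
   assert ((P*Q)*(P*Q) < (a*b+p*q)*(a*b+p*q)) by (apply Rmult_le_0_lt_compat; lra). nra. }
 nra. Qed.

Lemma triangle x y z : length x = length y -> length y = length z -> dist x z <= dist x y + dist y z.
Proof.
  rewrite !dist_sq. revert y z; induction x as [|a x IH]; intros [|b y] [|c z] H1 H2; try discriminate.
  - unfold sq; simpl. rewrite sqrt_0. lra.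
  - injection H1; injection H2; intros E2 E1. rewrite !sq_cons.
    specialize (IH y z E1 E2).
    pose proof (sq_nonneg x y). pose proof (sq_nonneg y z). pose proof (sq_nonneg x z).
    set (A := sq x y) in *. set (B := sq y z) in *. set (C := sq x z) in *.
    assert (HC : C <= (sqrt A + sqrt B) * (sqrt A + sqrt B)).
    { rewrite <- (sqrt_sqrt C) by lra. pose proof (sqrt_pos C). apply Rmult_le_compat; lra. }
    pose proof (pow2_ge_0 (a-b)). pose proof (pow2_ge_0 (b-c)).
    pose proof (tri_key (a-b) (b-c) (sqrt A) (sqrt B) (sqrt ((a-b)^2 + A)) (sqrt ((b-c)^2+B))
      (sqrt_pos _) (sqrt_pos _) (sqrt_pos _) (sqrt_pos _)
      ltac:(rewrite !sqrt_sqrt; lra) ltac:(rewrite !sqrt_sqrt; lra)).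
    apply Rle_trans with (sqrt ((sqrt ((a-b)^2 + A) + sqrt ((b-c)^2+B)) * (sqrt ((a-b)^2 + A) + sqrt ((b-c)^2+B)))).
    + apply sqrt_le_1_alt. replace (a-c) with ((a-b)+(b-c)) by ring. lra.
    + rewrite sqrt_square; [lra|]. pose proof (sqrt_pos ((a-b)^2 + A)). pose proof (sqrt_pos ((b-c)^2 + B)). lra.
Qed.

Lemma my_combine_app {A B} (p p' : list A) (q q' : list B) : length p = length q ->
  combine (p++p') (q++q') = combine p q ++ combine p' q'.
Proof. revert q; induction p as [|a p IH]; intros [|b q] H; simpl in *; try discriminate; auto. f_equal. auto. Qed.

Lemma sq_app p p' q q' : length p = length q -> sq (p++p') (q++q') = sq p q + sq p' q'.
Proof. intros H. unfold sq. rewrite my_combine_app, map_app, sum_list_app by auto. reflexivity. Qed.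

Lemma block_le n t u p q : (forall x, In x t -> length x = n) -> (forall x, In x u -> length x = n) ->
  In (p,q) (combine t u) -> sq p q <= sq (concat t) (concat u).
Proof. revert u; induction t as [|p0 t IH]; intros [|q0 u] Ht Hu Hin; simpl in Hin; try contradiction.
  simpl (concat _). rewrite sq_app by (rewrite (Ht p0), (Hu q0); simpl; auto).
  pose proof (sq_nonneg p0 q0); pose proof (sq_nonneg (concat t) (concat u)).
  destruct Hin as [E|Hin].
  - inversion E; subst; lra.
  - specialize (IH u (fun x h => Ht x (or_intror h)) (fun x h => Hu x (or_intror h)) Hin). lra.
Qed.

Lemma sum_zero {A} (f : A -> R) l : (forall x, In x l -> f x = 0) -> sum_list (map f l) = 0.
Proof. induction l as [|a l IH]; intros H; [reflexivity|]. cbn [map]. rewrite sum_list_cons, H, IH; [ring| |]; [intros; apply H; simpl; auto | simpl; auto]. Qed.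

Lemma sum_add {A} (f g : A -> R) l : sum_list (map f l) + sum_list (map g l) = sum_list (map (fun x => f x + g x) l).
Proof. induction l as [|a l IH]; [simpl; ring|]. cbn [map]. rewrite !sum_list_cons, <- IH. ring. Qed.

Lemma sum_sub {A} (f g : A -> R) l : sum_list (map f l) - sum_list (map g l) = sum_list (map (fun x => f x - g x) l).
Proof. induction l as [|a l IH]; [simpl; ring|]. cbn [map]. rewrite !sum_list_cons, <- IH. ring. Qed.

Lemma sum_lin {A} (c1 c2 : R) (f g : A -> R) l :
  sum_list (map (fun x => c1 * f x + c2 * g x) l) = c1 * sum_list (map f l) + c2 * sum_list (map g l).
Proof. induction l as [|a l IH]; [simpl; ring|]. cbn [map]. rewrite !sum_list_cons, IH. ring. Qed.

Lemma sum_abs_bound {A} (f : A -> R) l c : (forall x, In x l -> Rabs (f x) <= c) ->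
  Rabs (sum_list (map f l)) <= INR (length l) * c.
Proof. induction l as [|a l IH]; intros H.
 - simpl. rewrite Rabs_R0. lra.
 - cbn [map length]. rewrite sum_list_cons, S_INR.
   pose proof (Rabs_triang (f a) (sum_list (map f l))).
   assert (Rabs (f a) <= c) by (apply H; simpl; auto).
   assert (Rabs (sum_list (map f l)) <= INR (length l) * c) by (apply IH; intros; apply H; simpl; auto). lra.
Qed.

Lemma sum_swap (F : pt -> pt -> R) l1 l2 :
  sum_list (map (fun w => sum_list (map (fun v => F w v) l2)) l1) =
  sum_list (map (fun v => sum_list (map (fun w => F w v) l1)) l2).
Proof. induction l1 as [|w l1 IH]; cbn [map].
 - symmetry. apply sum_zero. intros; reflexivity.
 - rewrite sum_list_cons, IH, sum_add. reflexivity.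
Qed.

Lemma sum_indicator (c : pt) (d : R) l : In c l -> NoDup l ->
  sum_list (map (fun w => if pt_eq_dec c w then d else 0) l) = d.
Proof. induction l as [|x l IH]; intros Hin Hnd; [contradiction|]. inversion Hnd; subst. cbn [map]. rewrite sum_list_cons.
  destruct (pt_eq_dec c x) as [E|E].
  - subst. rewrite sum_zero; [ring|]. intros w Hw. destruct (pt_eq_dec x w); [subst; contradiction|reflexivity].
  - destruct Hin as [Hin|Hin]; [congruence|]. rewrite IH; auto. ring.
Qed.

Lemma sum_superset (f : pt -> R) l2 : forall l1, NoDup l1 -> NoDup l2 -> incl l1 l2 ->
  (forall x, In x l2 -> ~ In x l1 -> f x = 0) -> sum_list (map f l2) = sum_list (map f l1).
Proof.
 induction l2 as [|x l2 IH]; intros l1 Hn1 Hn2 Hinc Hz.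
 - destruct l1 as [|y l1]; [reflexivity|]. exfalso. apply (Hinc y); simpl; auto.
 - inversion Hn2 as [|? ? Hx2 Hn2']; subst. cbn [map]. rewrite sum_list_cons.
   destruct (in_dec pt_eq_dec x l1) as [Hx|Hx].
   + destruct (in_split _ _ Hx) as [la [lb E]]. subst l1.
     rewrite map_app. cbn [map]. rewrite sum_list_app, sum_list_cons.
     rewrite (IH (la++lb)).
     * rewrite map_app, sum_list_app. ring.
     * eapply NoDup_remove_1; eauto.
     * auto.
     * intros y Hy. assert (Hy' : In y (la ++ x :: lb)) by (apply in_app_iff in Hy; apply in_app_iff; simpl; tauto).
       destruct (Hinc y Hy') as [<-|]; auto. exfalso. apply (NoDup_remove_2 _ _ _ Hn1). exact Hy.
     * intros y Hy Hn. apply Hz. right; auto. intro H'. apply in_app_iff in H'. simpl in H'.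
       destruct H' as [H'|[<-|H']]; [apply Hn; apply in_app_iff; auto| contradiction | apply Hn, in_app_iff; auto].
   + rewrite Hz by (simpl; auto). rewrite (IH l1); auto; try ring.
     * intros y Hy. destruct (Hinc y Hy) as [<-|]; auto; contradiction.
     * intros y Hy Hn; apply Hz; simpl; auto.
Qed.

Lemma vert_mono s s' k X x : s <= s' -> lesnick_vert s k X x -> lesnick_vert s' k X x.
Proof. intros Hs [HX [l [Hl [Hnd Hall]]]]. split; auto. exists l; split; [|split]; auto.
  intros x' Hx'. destruct (Hall x' Hx') as [? [? ?]]. repeat split; auto; lra. Qed.

Lemma vert_incl s k X Y x : incl X Y -> lesnick_vert s k X x -> lesnick_vert s k Y x.
Proof. intros HXY [HX [l [Hl [Hnd Hall]]]]. split; auto. exists l; split; [|split]; auto.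
  intros x' Hx'. destruct (Hall x' Hx') as [? [? ?]]. repeat split; auto. Qed.

Lemma theta_exists n X Y k r s (HXn : forall x, In x Y -> length x = n) (HXY : incl X Y) (Hr : 0 < r) (Hs : 0 <= s)
 (Hdense : tuples_dense r X Y k) y :
 exists x, (lesnick_vert s k X y -> x = y) /\
   (lesnick_vert s k Y y -> lesnick_vert (s + 2*r) k X x /\ dist y x < r).
Proof.
 destruct (classic (lesnick_vert s k X y)) as [HX|HnX].
 - exists y. split; auto. intros _. split. apply vert_mono with s; auto; lra. rewrite dist_refl; auto.
 - destruct (classic (lesnick_vert s k Y y)) as [HY|HnY].
   2:{ exists y. split; intros; contradiction. }
   destruct HY as [HyY [l [Hl [Hnd Hall]]]].
   assert (Hb : dis_tuple Y k (y::l)).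
   { split; [simpl; congruence|split]. constructor; auto. intro Hin. destruct (Hall y Hin) as [_ [Hne _]]. congruence.
     intros x [<-|Hx]; auto. apply Hall; auto. }
   destruct (Hdense _ Hb) as [a [[Hal [Hand Hain]] Hd]].
   destruct a as [|x0 xs]; [discriminate|].
   assert (Hblk : forall p q, In (p,q) (combine (x0::xs) (y::l)) -> dist p q < r).
   { intros p q Hpq. unfold tuple_dist in Hd. rewrite dist_sq in *. eapply Rle_lt_trans; [|exact Hd].
     apply sqrt_le_1_alt. apply (block_le n);
       [intros z Hz; apply HXn, HXY, Hain; exact Hz | intros z [<-|Hz]; apply HXn; [exact HyY| apply Hall; exact Hz] | exact Hpq]. }
   exists x0. split; [intro; contradiction|]. intros _.
   assert (Hx0y : dist x0 y < r) by (apply Hblk; simpl; auto).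
   split; [|rewrite dist_sym; auto].
   split; [apply Hain; simpl; auto|]. exists xs. inversion Hand as [|? ? Hx0 Hndxs]; subst.
   simpl in Hal. split; [lia|]. split; auto.
   intros x' Hx'. split; [apply Hain; simpl; auto|]. split; [intro; subst; contradiction|].
   destruct (In_nth _ _ ([] : pt) Hx') as [i [Hi Hxi]].
   set (yi := nth i l ([] : pt)).
   assert (Hil : (i < length l)%nat) by lia.
   assert (Hyi : In yi l) by (apply nth_In; auto).
   assert (Hc : In (x', yi) (combine xs l)).
   { assert (E : (x', yi) = nth i (combine xs l) (([]:pt),([]:pt))) by (rewrite combine_nth by lia; rewrite Hxi; reflexivity).
     rewrite E. apply nth_In. rewrite length_combine. lia. }
   assert (dist x' yi < r) by (apply Hblk; simpl; auto).
   destruct (Hall yi Hyi) as [HyiY [_ Hdyyi]].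
   assert (Lx0 : length x0 = n) by (apply HXn, HXY, Hain; simpl; auto).
   assert (Lx' : length x' = n) by (apply HXn, HXY, Hain; simpl; auto).
   assert (Ly : length y = n) by (apply HXn; auto).
   assert (Lyi : length yi = n) by (apply HXn; auto).
   pose proof (triangle x0 y x' ltac:(congruence) ltac:(congruence)).
   pose proof (triangle y yi x' ltac:(congruence) ltac:(congruence)).
   rewrite (dist_sym yi x') in *. lra.
Qed.

Lemma in_real_bound K a : in_real K a -> forall v, 0 <= a v <= 1.
Proof. intros [sigma [_ [_ [Hz [Hpos Hsum]]]]] v.
  destruct (in_dec pt_eq_dec v sigma) as [Hv|Hv].
  - split; auto. rewrite <- Hsum. apply sum_list_In; [|apply in_map; auto].
    intros y Hy. apply in_map_iff in Hy. destruct Hy as [x [<- Hx]]. auto.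
  - rewrite Hz by auto. lra.
Qed.

Theorem theorem3 (n : nat) (X Y : list pt) (k : nat) (r s : R)
  (HXn : forall x, In x Y -> is_point n x)
  (HXnd : NoDup X) (HYnd : NoDup Y) (HXY : incl X Y)
  (Hr : 0 < r) (Hs : 0 <= s)
  (Hdense : tuples_dense r X Y k)
  (Hne : complex_nonempty (lesnick_simplex s k Y)) :
  exists theta : pt -> pt,
    simplicial (lesnick_simplex s k Y) (lesnick_simplex (s + 2 * r) k X) theta /\
    (forall x, lesnick_vert s k X x -> theta x = x) /\
    homotopic_real Y (lesnick_simplex s k Y) (lesnick_simplex (s + 2 * r) k Y)
      (real_map Y theta) (fun a => a).
Proof.
  assert (Hlen : forall x, In x Y -> length x = n) by exact HXn.
  pose (theta := fun y => proj1_sig (constructive_indefinite_description _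
                   (theta_exists n X Y k r s Hlen HXY Hr Hs Hdense y))).
  assert (Hth : forall y, (lesnick_vert s k X y -> theta y = y) /\
     (lesnick_vert s k Y y -> lesnick_vert (s+2*r) k X (theta y) /\ dist y (theta y) < r)).
  { intro y. unfold theta. destruct (constructive_indefinite_description _ _) as [x Hx]. simpl. exact Hx. }
  clearbody theta.
  assert (HvY : forall y, lesnick_vert s k Y y -> In y Y) by (intros y [H _]; exact H).
  assert (HthX : forall y, lesnick_vert s k Y y -> lesnick_vert (s+2*r) k X (theta y)) by (intros; apply Hth; auto).
  assert (HthY : forall y, lesnick_vert s k Y y -> In (theta y) Y)
    by (intros y H; apply HXY; apply (HthX y H)).
  assert (Hthd : forall y, lesnick_vert s k Y y -> dist y (theta y) < r) by (intros; apply Hth; auto).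
  assert (Hthd' : forall y, lesnick_vert s k Y y -> dist (theta y) y < r)
    by (intros; rewrite dist_sym; apply Hth; auto).
  assert (Htri : forall x y z, In x Y -> In y Y -> In z Y -> dist x z <= dist x y + dist y z).
  { intros x y z Hx Hy Hz. apply triangle; rewrite !Hlen; auto. }
  exists theta. split; [|split].
  -
    intros sigma [Hne' [Hv Hd]]. split; [|split].
    + destruct sigma; [congruence|discriminate].
    + intros x Hx. apply in_map_iff in Hx. destruct Hx as [y [<- Hy]]. apply HthX, Hv; auto.
    + intros x z Hx Hz. apply in_map_iff in Hx. destruct Hx as [y1 [<- Hy1]].
      apply in_map_iff in Hz. destruct Hz as [y2 [<- Hy2]].
      pose proof (Hv _ Hy1) as V1. pose proof (Hv _ Hy2) as V2.
      pose proof (Htri (theta y1) y1 (theta y2) (HthY _ V1) (HvY _ V1) (HthY _ V2)).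
      pose proof (Htri y1 y2 (theta y2) (HvY _ V1) (HvY _ V2) (HthY _ V2)).
      pose proof (Hd y1 y2 Hy1 Hy2). pose proof (Hthd' _ V1). pose proof (Hthd _ V2). lra.
  - intros x Hx. apply Hth; auto.
  - exists (fun a t w => (1 - t) * real_map Y theta a w + t * a w).
    split; [|split; [|split]].
    + intros a t Ha Ht. pose proof (in_real_bound _ _ Ha) as Hab.
      destruct Ha as [sigma [[Hne' [Hv Hd]] [Hnd [Hz [Hpos Hsum]]]]].
      set (tau := nodup pt_eq_dec (sigma ++ map theta sigma)).
      assert (Htau : forall v, In v tau <-> In v sigma \/ In v (map theta sigma)).
      { intro v. unfold tau. rewrite nodup_In, in_app_iff. tauto. }
      assert (HRz : forall v, ~ In v tau -> real_map Y theta a v = 0).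
      { intros v Hv'. unfold real_map. apply sum_zero. intros u Hu.
        destruct (pt_eq_dec (theta u) v) as [E|E]; [|reflexivity].
        apply Hz. intro Hu'. apply Hv', Htau. right. rewrite <- E. apply in_map; auto. }
      exists tau. split; [|split; [|split; [|split]]].
      * split; [|split].
        -- destruct sigma as [|x0 sig]; [congruence|]. intro E. assert (In x0 tau) by (apply Htau; simpl; auto).
           rewrite E in H; contradiction.
        -- intros x Hx. apply Htau in Hx. destruct Hx as [Hx|Hx].
           ++ apply vert_mono with s; [lra|]. auto.
           ++ apply in_map_iff in Hx. destruct Hx as [y [<- Hy]]. apply vert_incl with X; auto.
        -- assert (Hc : forall x z, In x sigma -> In z sigma -> dist x (theta z) <= s + r).
           { intros x z Hx Hz'. pose proof (Htri x z (theta z) (HvY _ (Hv _ Hx)) (HvY _ (Hv _ Hz')) (HthY _ (Hv _ Hz'))).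
             pose proof (Hd x z Hx Hz'). pose proof (Hthd _ (Hv _ Hz')). lra. }
           intros x z Hx Hz'. apply Htau in Hx. apply Htau in Hz'.
           destruct Hx as [Hx|Hx]; destruct Hz' as [Hz'|Hz'].
           ++ pose proof (Hd x z Hx Hz'). lra.
           ++ apply in_map_iff in Hz'. destruct Hz' as [z' [<- Hz']]. pose proof (Hc x z' Hx Hz'). lra.
           ++ apply in_map_iff in Hx. destruct Hx as [x' [<- Hx]]. rewrite dist_sym. pose proof (Hc z x' Hz' Hx). lra.
           ++ apply in_map_iff in Hx. destruct Hx as [y1 [<- Hy1]].
              apply in_map_iff in Hz'. destruct Hz' as [y2 [<- Hy2]].
              pose proof (Hv _ Hy1) as V1. pose proof (Hv _ Hy2) as V2.
              pose proof (Htri (theta y1) y1 (theta y2) (HthY _ V1) (HvY _ V1) (HthY _ V2)).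
              pose proof (Hc y1 y2 Hy1 Hy2). pose proof (Hthd' _ V1). lra.
      * apply NoDup_nodup.
      * intros v Hv'. rewrite HRz by auto. rewrite Hz; [ring|]. intro H; apply Hv', Htau; auto.
      * intros v _. assert (0 <= real_map Y theta a v).
        { unfold real_map. apply sum_list_nonneg. intros x Hx. apply in_map_iff in Hx.
          destruct Hx as [u [<- _]]. destruct (pt_eq_dec (theta u) v); [apply Hab|lra]. }
        pose proof (Hab v). apply Rplus_le_le_0_compat; apply Rmult_le_pos; lra.
      * rewrite sum_lin.
        assert (Hincl : incl sigma tau) by (intros x Hx; apply Htau; auto).
        assert (S2 : sum_list (map a tau) = 1).
        { rewrite (sum_superset a tau sigma); auto. apply NoDup_nodup. }
        assert (S1 : sum_list (map (real_map Y theta a) tau) = 1).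
        { unfold real_map. rewrite (sum_swap (fun w v => if pt_eq_dec (theta v) w then a v else 0)).
          rewrite (map_ext_in _ a).
          - rewrite (sum_superset a Y sigma); auto. intros x Hx; apply HvY, Hv; auto.
          - intros v Hv'. destruct (in_dec pt_eq_dec v sigma) as [Hs'|Hs'].
            + apply sum_indicator; [|apply NoDup_nodup]. apply Htau. right. apply in_map; auto.
            + rewrite (Hz v Hs'). apply sum_zero. intros w _. destruct (pt_eq_dec (theta v) w); reflexivity. }
        rewrite S1, S2. ring.
    + intros a w _. cbv beta. ring.
    + intros a w _. cbv beta. ring.
    + intros a t Ha Ht eps Heps.
      set (N := INR (length Y)).
      assert (HN : 0 <= N) by apply pos_INR.
      set (delta := eps / (2*N+3)).
      assert (Hdel : 0 < delta) by (apply Rdiv_lt_0_compat; lra).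
      assert (Hdeq : delta * (2*N+3) = eps) by (unfold delta; field; lra).
      exists delta. split; auto.
      intros b u Hb Hu Hut Hbv w Hw. cbv beta.
      pose proof (in_real_bound _ _ Ha) as Hab.
      assert (HRa : Rabs (real_map Y theta a w) <= N * 1).
      { apply sum_abs_bound. intros v _. destruct (pt_eq_dec (theta v) w).
        - pose proof (Hab v). rewrite Rabs_pos_eq; lra.
        - rewrite Rabs_R0; lra. }
      assert (HD : Rabs (real_map Y theta b w - real_map Y theta a w) <= N * delta).
      { unfold real_map. rewrite sum_sub. apply sum_abs_bound. intros v Hv.
        destruct (pt_eq_dec (theta v) w).
        - left. apply Hbv; auto.
        - replace (0 - 0) with 0 by ring. rewrite Rabs_R0; lra. }
      assert (Haw : Rabs (a w) <= 1) by (pose proof (Hab w); rewrite Rabs_pos_eq; lra).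
      assert (Hbw : Rabs (b w - a w) <= delta) by (left; apply Hbv; auto).
      assert (Htu : Rabs (t - u) <= delta) by (rewrite Rabs_minus_sym; left; auto).
      assert (Hut' : Rabs (u - t) <= delta) by (left; auto).
      set (D := real_map Y theta b w - real_map Y theta a w) in *.
      set (Ra := real_map Y theta a w) in *.
      replace ((1 - u) * real_map Y theta b w + u * b w - ((1 - t) * Ra + t * a w))
        with ((1-u)*D + (t-u)*Ra + (u*(b w - a w) + (u-t)*a w)) by (unfold D, Ra; ring).
      assert (T1 : Rabs ((1-u)*D) <= 1 * (N*delta)).
      { rewrite Rabs_mult. apply Rmult_le_compat; try apply Rabs_pos; auto. rewrite Rabs_pos_eq; lra. }
      assert (T2 : Rabs ((t-u)*Ra) <= delta * (N*1)).
      { rewrite Rabs_mult. apply Rmult_le_compat; try apply Rabs_pos; auto. }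
      assert (T3 : Rabs (u*(b w - a w)) <= 1 * delta).
      { rewrite Rabs_mult. apply Rmult_le_compat; try apply Rabs_pos; auto. rewrite Rabs_pos_eq; lra. }
      assert (T4 : Rabs ((u-t)*a w) <= delta * 1).
      { rewrite Rabs_mult. apply Rmult_le_compat; try apply Rabs_pos; auto. }
      pose proof (Rabs_triang ((1-u)*D + (t-u)*Ra) (u*(b w - a w) + (u-t)*a w)).
      pose proof (Rabs_triang ((1-u)*D) ((t-u)*Ra)).
      pose proof (Rabs_triang (u*(b w - a w)) ((u-t)*a w)).
      nra.
Qed.
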